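(* Let $p$ be a prime such that $2^p-1$ is a (Mersenne) prime. Then $2^{p-1}(2^p-1)$ is the only even perfect number which is $3(2p-1)$-$T_0T^\ast$-perfect.
   Context: A perfect number is a positive integer $N$ with $\sigma(N)=2N$. For a positive integer $m$, $T(m)$ denotes the product of all positive divisors of $m$, and $T^\ast(m)$ the product of all unitary divisors of $m$ (divisors $d$ with $\gcd(d,m/d)=1$). For an integer $K\ge 2$, an integer $n>1$ is called $K$-$T_0T^\ast$-perfect if $T(T^\ast(n))=n^K$. *)

(* Defs.v *)
From mathcomp Require Import all_boot.
Set Implicit Arguments. Unset Strict Implicit. Unset Printing Implicit Defensive.

Definition sigma (n : nat) : nat := \sum_(d <- divisors n) d.

Definition perfect (N : nat) : Prop := 0 < N /\ sigma N = 2 * N.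

Definition T (m : nat) : nat := \prod_(d <- divisors m) d.

Definition Tstar (m : nat) : nat :=
  \prod_(d <- divisors m | coprime d (m %/ d)) d.

Definition KT0Tstar_perfect (K n : nat) : Prop :=
  2 <= K /\ 1 < n /\ T (Tstar n) = n ^ K.

(* Main.v *)
Require Import Defs.
From mathcomp Require Import all_boot zify.
Set Warnings "-notation-overridden".

Lemma L1f p m : prime p -> coprime p m -> forall k d, d %| p^k*m ->
  exists i e, [/\ i <= k, e %| m & d = p^i * e].
Proof.
move=> pp cpm; elim=> [|k IH] d.
  by rewrite expn0 mul1n => dm; exists 0, d; rewrite expn0 mul1n.
have p0 : 0 < p by apply: prime_gt0.
case pd: (p %| d).
  case/dvdnP: pd => x ->.
  rewrite expnS -mulnA (mulnC p) dvdn_pmul2r // => /IH [i [e [ik em ->]]].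
  by exists i.+1, e; split => //; rewrite mulnAC expnS (mulnC p).
move=> dd; exists 0, d; rewrite expn0 mul1n; split => //.
have cd : coprime d (p ^ k.+1) by rewrite coprime_sym coprimeXl // prime_coprime // pd.
by rewrite -(Gauss_dvdr _ cd).
Qed.

Definition L1s p k m := [seq p^i * e | i <- iota 0 k.+1, e <- divisors m].

Lemma L1mem p m k : prime p -> coprime p m -> 0 < m ->
  divisors (p^k*m) =i L1s p k m.
Proof.
move=> pp cpm m0 d.
have p0 : 0 < p by apply: prime_gt0.
rewrite -dvdn_divisors ?muln_gt0 ?expn_gt0 ?p0 ?m0 //.
apply/idP/allpairsP.
  case/(@L1f p m pp cpm k) => i [e [ik em ->]].
  exists (i, e); split; [by rewrite mem_iota add0n ltnS | by rewrite /= -dvdn_divisors | by []].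
case=> [[i e]] []; rewrite mem_iota add0n ltnS /= -dvdn_divisors // => ik em ->.
by apply: dvdn_mul => //; apply: dvdn_exp2l.
Qed.

Lemma L1uniq p m k : prime p -> coprime p m -> 0 < m -> uniq (L1s p k m).
Proof.
move=> pp cpm m0; apply: allpairs_uniq; first exact: iota_uniq.
  exact: divisors_uniq.
have p0 : 0 < p by apply: prime_gt0.
have lg : forall i e, e \in divisors m -> logn p (p^i * e) = i.
  move=> i e; rewrite -dvdn_divisors // => em.
  have e0 : 0 < e by apply: dvdn_gt0 em.
  rewrite lognM ?expn_gt0 ?p0 // pfactorK // logn_coprime ?addn0 //.
  by apply: coprime_dvdr em cpm.
case=> [i e] [j f] /allpairsP [[i' e'] [_ He' E1]]
  /allpairsP [[j' f'] [_ Hf' E2]]; case: E1 => -> ->; case: E2 => -> -> /= E.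
have ij : i' = j' by rewrite -(lg i' e' He') E lg.
move: E; rewrite ij => /eqP; rewrite eqn_pmul2l ?expn_gt0 ?p0 // => /eqP ->.
by [].
Qed.

Lemma L1perm p m k : prime p -> coprime p m -> 0 < m ->
  perm_eq (divisors (p^k*m)) (L1s p k m).
Proof.
move=> pp cpm m0; apply: uniq_perm; [exact: divisors_uniq|exact: L1uniq|exact: L1mem].
Qed.

Lemma L1size p m k : prime p -> coprime p m -> 0 < m ->
  size (divisors (p^k*m)) = k.+1 * size (divisors m).
Proof.
move=> pp cpm m0; rewrite (perm_size (@L1perm p m k pp cpm m0)) size_allpairs size_iota //.
Qed.

Lemma geo2 k : (\sum_(i <- iota 0 k.+1) 2^i).+1 = 2^k.+1.
Proof.
elim: k => [|k IH]; first by rewrite big_cons big_nil.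
rewrite -[iota 0 k.+2]/(index_iota 0 k.+2) big_nat_recr //=.
rewrite -addSn -[index_iota 0 k.+1]/(iota 0 k.+1) IH.
by rewrite [2^k.+2]expnS mul2n addnn.
Qed.

Lemma sigma2 k m : odd m -> sigma (2^k*m) = (2^k.+1 - 1) * sigma m.
Proof.
move=> om.
have m0 : 0 < m by case: m om.
have cm : coprime 2 m by rewrite coprime2n.
rewrite /sigma (perm_big _ (@L1perm 2 m k erefl cm m0)) /L1s big_allpairs_dep /=.
rewrite (eq_bigr (fun i => 2^i * \sum_(d <- divisors m) d)); last first.
  by move=> i _; rewrite big_distrr.
rewrite -big_distrl /=; congr (_ * _).
by rewrite -geo2 subn1.
Qed.

Lemma sigma_ge m s : 0 < m -> uniq s -> all (fun d => d %| m) s ->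
  \sum_(d <- s) d <= sigma m.
Proof.
move=> m0 us /allP As.
have P : perm_eq s (filter (mem s) (divisors m)).
  apply: uniq_perm => //; first by rewrite filter_uniq // divisors_uniq.
  move=> d; rewrite mem_filter /=; case ds: (d \in s) => //=.
  by rewrite -dvdn_divisors // As.
rewrite (perm_big _ P) big_filter /sigma big_mkcond /=.
by apply: leq_sum => i _; case: ifP.
Qed.

Lemma euler N : perfect N -> ~~ odd N ->
  exists k, [/\ 0 < k, prime (2^k.+1 - 1) & N = 2^k * (2^k.+1 - 1)].
Proof.
case=> N0 sN ev.
have [m cm Nm] := @pfactor_coprime 2 N erefl N0.
move: Nm; set k := logn 2 N => Nm.
have om : odd m by rewrite -coprime2n.
have m0 : 0 < m by case: m om {cm Nm}.
have k0 : 0 < k.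
  case: (posnP k) => // k0; move: ev; rewrite Nm k0 expn0 muln1 om //.
rewrite Nm mulnC sigma2 // in sN.
have k2 : 2 <= 2^k by rewrite -{1}(expn1 2) leq_exp2l.
set B := 2^k.+1 - 1 in sN *.
have AB : 2^k.+1 = B.+1 by rewrite /B expnS; lia.
have B3 : 3 <= B by rewrite /B expnS; lia.
have sN' : B * sigma m = B.+1 * m by rewrite sN -AB expnS; lia.
have Bm : B %| m.
  rewrite -(@Gauss_dvdr B B.+1 m) ?coprimenS //.
  by apply/dvdnP; exists (sigma m); rewrite -sN' mulnC.
case/dvdnP: Bm => c mc.
have sm : sigma m = B.+1 * c.
  apply/eqP; rewrite -(@eqn_pmul2l B) ?(leq_trans _ B3) // sN' mc [c*B]mulnC mulnCA.
  by [].


have c1 : c = 1.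
  case: (ltngtP c 1) => // c1.
    by move: m0; rewrite mc (_ : c = 0) //; lia.
  have cB : c < c * B by apply: ltn_Pmulr; lia.
  have := @sigma_ge m [:: 1; c; m] m0.
  rewrite /= !inE big_cons big_cons big_cons big_nil sm dvd1n dvdnn mc dvdn_mulr //=.
  have -> : (1 == c) = false by apply/negbTE; lia.
  have -> : (1 == c * B) = false by apply/negbTE; lia.
  have -> : (c == c * B) = false by apply/negbTE; lia.
  rewrite mulSn [B*c]mulnC; move: (c*B) cB => x cx.
  move=> /(_ isT isT); lia.
rewrite c1 mul1n in mc; rewrite c1 muln1 in sm; rewrite mc in sm Nm.
exists k; split => //; last by rewrite Nm mulnC.
apply/negPn/negP => /primePn [|[d /andP [d1 dB] dd]]; first lia.
have := @sigma_ge B [:: 1; d; B] (leq_trans (isT : 0 < 3) B3).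
rewrite /= !inE big_cons big_cons big_cons big_nil sm dvd1n dvdnn dd /=.
have -> : (1 == d) = false by apply/negbTE; lia.
have -> : (1 == B) = false by apply/negbTE; lia.
have -> : (d == B) = false by apply/negbTE; lia.
move=> /(_ isT isT); lia.
Qed.

Lemma divK m d : 0 < m -> d %| m -> m %/ (m %/ d) = d.
Proof.
move=> m0 dm.
have d0 : 0 < d by apply: dvdn_gt0 dm.
have q0 : 0 < m %/ d by rewrite divn_gt0 // dvdn_leq.
by rewrite {1}(esym (divnK dm)) mulKn.
Qed.

Lemma dvd_div m d : d %| m -> m %/ d %| m.
Proof. by move=> dm; rewrite {2}(esym (divnK dm)) dvdn_mulr. Qed.

Lemma Tsq m : 0 < m -> T m ^ 2 = m ^ size (divisors m).
Proof.
move=> m0.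
have P : perm_eq (divisors m) (map (fun d => m %/ d) (divisors m)).
  apply: uniq_perm; first exact: divisors_uniq.
    rewrite map_inj_in_uniq ?divisors_uniq //.
    move=> x y; rewrite -!dvdn_divisors // => xm ym E.
    by rewrite -(@divK m x m0 xm) E divK.
  move=> x; apply/idP/mapP.
    rewrite -dvdn_divisors // => xm; exists (m %/ x); last by rewrite divK.
    by rewrite -dvdn_divisors // dvd_div.
  by case=> y; rewrite -!dvdn_divisors // => ym ->; apply: dvd_div.
rewrite expnS expn1 {2}/T (perm_big _ P) big_map /T -big_split /=.
rewrite (eq_big_seq (fun _ => m)); last first.
  by move=> d; rewrite -dvdn_divisors // => dm; rewrite mulnC divnK.
by rewrite big_const_seq count_predT iter_muln_1.
Qed.

Lemma TstarN k M : 0 < k -> prime M -> odd M -> Tstar (2^k * M) = (2^k * M)^2.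
Proof.
move=> k0 pM oM.
set N := 2^k * M.
have M3 : 3 <= M by have := prime_gt1 pM; case: M oM pM {N} => [|[|[|]]].
have x2 : 2 <= 2^k by rewrite -{1}(expn1 2) leq_exp2l.
have N0 : 0 < N by rewrite /N; nia.
have NM : M < N by apply: ltn_Pmull; lia.
have Nx : 2^k < N by apply: ltn_Pmulr; lia.
have xM : (2^k == M) = false.
  by apply/negbTE/eqP => E; move: oM; rewrite -E oddX; case: k k0 {E Nx x2 N N0 NM}.
have cM : coprime 2 M by rewrite coprime2n.
have P : perm_eq [seq d <- divisors N | coprime d (N %/ d)] [:: 1; 2^k; M; N].
  apply: uniq_perm; first by rewrite filter_uniq // divisors_uniq.
    rewrite /= !inE xM.
    have -> : (1 == 2^k) = false by apply/negbTE; lia.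
    have -> : (1 == M) = false by apply/negbTE; lia.
    have -> : (1 == N) = false by apply/negbTE; lia.
    have -> : (2^k == N) = false by apply/negbTE; lia.
    have -> : (M == N) = false by apply/negbTE; lia.
    by [].
  move=> d; rewrite mem_filter -dvdn_divisors //; apply/idP/idP.
    case/andP => cop dN.
    have [i [e [ik eM de]]] := @L1f 2 M erefl cM k d dN.
    have e0 : 0 < e by apply: dvdn_gt0 eM; lia.
    have d0 : 0 < d by rewrite de; nia.
    have dX : N = d * (2^(k-i) * (M %/ e)).
      rewrite de /N -{1}(subnKC ik) expnD -{1}(divnK eM).
      by move: (2^i) (2^(k-i)) (M %/ e) => a b c; rewrite mulnC !mulnA [c*e]mulnC; lia.
    move: cop; rewrite {1}dX mulKn // => cop.
    have iik : (i == 0) || (i == k).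
      case: (posnP i) => // i0; case: (ltngtP i k) => //; last by lia.
      move=> ilk; exfalso.
      have : 2 %| gcdn d (2 ^ (k - i) * (M %/ e)).
        rewrite dvdn_gcd de !dvdn_mulr //; apply: dvdn_exp => //; lia.
      by rewrite (eqP cop).
    have := (primeP pM).2 e eM; rewrite !inE.
    rewrite de; case/orP: iik => /eqP -> /orP [] /eqP ->;
      by rewrite ?expn0 ?mul1n ?muln1 ?eqxx ?orbT.
  rewrite !inE => /or4P [] /eqP ->.
  - by rewrite coprime1n dvd1n.
  - by rewrite /N mulKn ?expn_gt0 // (coprime_pexpl _ _ k0) cM dvdn_mulr.
  - by rewrite /N mulnK ?(leq_trans _ M3) // coprime_sym (coprime_pexpl _ _ k0) cM dvdn_mull.
  - by rewrite divnn N0 coprimen1 dvdnn.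
rewrite /Tstar -big_filter (perm_big _ P) !big_cons big_nil.
by rewrite /= mul1n muln1 expnS expn1 /N !mulnA.
Qed.

Lemma TTN k M : 0 < k -> prime M -> odd M ->
  T (Tstar (2^k * M)) = (2^k * M) ^ (3 * (2 * k).+1).
Proof.
move=> k0 pM oM.
have M0 : 0 < M by apply: prime_gt0.
have N0 : 0 < 2^k * M by rewrite muln_gt0 expn_gt0 M0.
rewrite TstarN //.
apply: (@expIn 2) => //=.
rewrite Tsq ?expn_gt0 ?N0 //.
have E : (2^k * M)^2 = 2^(2*k) * (M^2 * 1).
  by rewrite muln1 expnMn -expnM [k*2]mulnC.
have cM2 : coprime 2 (M^2 * 1) by rewrite muln1 coprime2n oddX oM orbT.
have cM1 : coprime M 1 by rewrite coprimen1.
rewrite E (@L1size 2 _ _ erefl cM2) ?muln_gt0 ?expn_gt0 ?M0 //.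
rewrite -{1}(muln1 (M^2)) (@L1size M 1 2 pM cM1) //.
have -> : size (divisors 1) = 1 by [].
rewrite !muln1 -!expnM !expnMn -!expnM -expnD; congr (_ * _); congr (_ ^ _); nia.
Qed.


Lemma oddM k : odd (2^k.+1 - 1).
Proof. by rewrite oddB ?expn_gt0 // oddX. Qed.

Theorem mainTheorem14 (p : nat) (hp : prime p) (hM : prime (2 ^ p - 1)) :
  forall N : nat, perfect N -> ~~ odd N ->
    (KT0Tstar_perfect (3 * (2 * p - 1)) N <-> N = 2 ^ (p - 1) * (2 ^ p - 1)).
Proof.
move=> N pN eN.
have p2 := prime_gt1 hp.
case: p hp hM p2 => [//|k] hp hM p2.
have -> : k.+1 - 1 = k by lia.
split.
  case=> _ [N1 E].
  have [j [j0 pB NE]] := @euler N pN eN.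
  move: E; rewrite NE TTN ?oddM // -NE => /eqP; rewrite eqn_exp2l // => /eqP E.
  have jk : j = k by lia.
  by rewrite NE jk.
move=> NE.
have k0 : 0 < k by lia.
have M3 : 2 < 2^k.+1 - 1.
  have := prime_gt1 hM; have := oddM k; case: (2^k.+1 - 1) => [|[|[|]]] //.
split; first lia.
split.
  rewrite NE; have : 2 <= 2^k by rewrite -{1}(expn1 2) leq_exp2l. nia.
rewrite NE TTN ?oddM //; congr (_ ^ _); lia.
Qed.
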